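(* Let $\mathcal{X}=\{x_1,\dots,x_n\}$, let $\mathcal{X}_{\mathrm{in}}\subseteq\mathcal{X}$ have $n_{\mathrm{in}}\ge2$ points, let $1\le n_{\mathrm{out}}\le n_{\mathrm{in}}$, and let $\mathcal{X}_{\mathrm{out}}$ be a subset of $\mathcal{X}_{\mathrm{in}}$ of size $n_{\mathrm{out}}$ chosen uniformly at random (i.e., uniform subsampling without replacement). Then for every symmetric positive semidefinite $K\in\mathbb{R}^{n\times n}$ and every $\mathcal{I}\subseteq[n]$, $$\mathbb{E}\big[\mathrm{MMD}_K^2(p_{\mathrm{in}},q_{\mathrm{out}})\big]=\frac{1}{n_{\mathrm{out}}}\cdot\frac{n_{\mathrm{in}}-n_{\mathrm{out}}}{n_{\mathrm{in}}-1}\,C_K$$ and $$\mathbb{E}\big[\|K(p_{\mathrm{in}}-q_{\mathrm{out}})\|_{\mathcal{I}}^2\big]\ge\frac{1}{n_{\mathrm{out}}}\cdot\frac{n_{\mathrm{in}}-n_{\mathrm{out}}}{n_{\mathrm{in}}-1}\,\max_{i\in\mathcal{I}}C_{Ke_ie_i^\top K},$$ where for an $n\times n$ matrix $M$, $C_M:=\sum_{i=1}^n p_{\mathrm{in},i}M_{ii}-p_{\mathrm{in}}^\top Mp_{\mathrm{in}}$.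
   Context: $p_{\mathrm{in}},q_{\mathrm{out}}\in\mathbb{R}^n$ are given by $p_{\mathrm{in},i}=\mathbf{1}\{x_i\in\mathcal{X}_{\mathrm{in}}\}/n_{\mathrm{in}}$ and $q_{\mathrm{out},i}=\mathbf{1}\{x_i\in\mathcal{X}_{\mathrm{out}}\}/n_{\mathrm{out}}$. $\mathrm{MMD}_K(p,q):=\sqrt{(p-q)^\top K(p-q)}$ and $\|K(p_{\mathrm{in}}-q_{\mathrm{out}})\|_{\mathcal{I}}:=\max_{i\in\mathcal{I}}|e_i^\top K(p_{\mathrm{in}}-q_{\mathrm{out}})|$, with $e_i$ the $i$-th standard basis vector. *)

(* Defs.v *)
From mathcomp Require Import all_boot all_order all_algebra.
Set Implicit Arguments. Unset Strict Implicit. Unset Printing Implicit Defensive.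
Import Order.TTheory GRing.Theory Num.Theory.
Local Open Scope ring_scope.

Section Defs.
Variables (R : realFieldType) (n : nat).

Definition ind_vec (A : {set 'I_n}) : 'cV[R]_n :=
  \col_i ((i \in A)%:R / #|A|%:R).

Definition MMD2 (K : 'M[R]_n) (p q : 'cV[R]_n) : R :=
  (((p - q)^T *m K *m (p - q)) 0 0).

Definition normI (I : {set 'I_n}) (v : 'cV[R]_n) : R :=
  \big[Num.max/0]_(i in I) `|v i 0|.

Definition CM (p : 'cV[R]_n) (M : 'M[R]_n) : R :=
  \sum_i p i 0 * M i i - ((p^T *m M *m p) 0 0).

Definition e_ (i : 'I_n) : 'cV[R]_n := delta_mx i 0.

Definition psd (K : 'M[R]_n) : Prop :=
  K^T = K /\ forall v : 'cV[R]_n, 0 <= (v^T *m K *m v) 0 0.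

Definition subsamples (Xin : {set 'I_n}) (m : nat) : {set {set 'I_n}} :=
  [set S : {set 'I_n} | (S \subset Xin) && (#|S| == m)].

Definition Esub (Xin : {set 'I_n}) (m : nat) (f : {set 'I_n} -> R) : R :=
  (\sum_(S in subsamples Xin m) f S) / #|subsamples Xin m|%:R.

End Defs.

(* Main.v *)
Require Import Defs.
From mathcomp Require Import all_boot all_order all_algebra.
From mathcomp Require Import ring lra.
Set Implicit Arguments. Unset Strict Implicit. Unset Printing Implicit Defensive.
Import Order.TTheory GRing.Theory Num.Theory.
Local Open Scope ring_scope.

Section Aux.
Variables (R : realFieldType) (n : nat).
Implicit Types (A S T : {set 'I_n}).

Lemma sub_reindex A k i (P : {set 'I_n} -> bool) : i \in A ->
  #|[set S in subsamples A k.+1 | (i \in S) && P S]| =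
  #|[set T in subsamples (A :\ i) k | P (i |: T)]|.
Proof.
move=> iA.
rewrite -[RHS](@card_in_imset _ _ (fun T => i |: T)); last first.
  move=> T1 T2; rewrite !inE => /andP[/andP[s1 _] _] /andP[/andP[s2 _] _] e.
  have n1 : i \notin T1 by apply/negP => /(subsetP s1); rewrite !inE eqxx.
  have n2 : i \notin T2 by apply/negP => /(subsetP s2); rewrite !inE eqxx.
  by rewrite -(setU1K n1) -(setU1K n2) e.
apply: eq_card => S; rewrite !inE; apply/idP/idP.
  case/andP=> /andP[sSA /eqP cS] /andP[iS PS].
  apply/imsetP; exists (S :\ i); last by rewrite setD1K.
  rewrite !inE setD1K // PS andbT setSD //=.
  by move: cS; rewrite (cardsD1 i S) iS add1n => -[->].
case/imsetP=> T; rewrite !inE => /andP[/andP[sT /eqP cT] PT] ->.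
have nT : i \notin T by apply/negP => /(subsetP sT); rewrite !inE eqxx.
rewrite PT setU11 cardsU1 nT cT add1n eqxx !andbT /=.
rewrite subUset sub1set iA /=; apply: subset_trans sT _; exact: subsetDl.
Qed.

Lemma cnt1 A k j : j \in A ->
  (#|[set S in subsamples A k | j \in S]| * #|A| = 'C(#|A|, k) * k)%N.
Proof.
move=> jA; case: k => [|k].
  rewrite muln0; apply/eqP; rewrite muln_eq0; apply/orP; left.
  apply/eqP; apply: eq_card0 => S; rewrite !inE.
  apply/negP => /andP[/andP[_ /eqP /cards0_eq ->]]; by rewrite inE.
have -> : #|[set S in subsamples A k.+1 | j \in S]| =
          #|[set S in subsamples A k.+1 | (j \in S) && true]|.
  by apply: eq_card => S; rewrite !inE andbT.
rewrite sub_reindex //.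
have -> : #|[set T in subsamples (A :\ j) k | true]| = 'C(#|A :\ j|, k).
  rewrite -cards_draws; apply: eq_card => S; rewrite !inE andbT //.
have : #|A| = (#|A :\ j|).+1 by rewrite (cardsD1 j A) jA.
move=> hA; rewrite hA mulnC mul_bin_diag mulnC //.
Qed.

Lemma cnt2 A k i j : i \in A -> j \in A -> i != j ->
  (#|[set S in subsamples A k | (i \in S) && (j \in S)]| * (#|A| * #|A|.-1)
   = 'C(#|A|, k) * (k * k.-1))%N.
Proof.
move=> iA jA ij; case: k => [|k].
  rewrite mul0n muln0; apply/eqP; rewrite muln_eq0; apply/orP; left.
  apply/eqP; apply: eq_card0 => S; rewrite !inE.
  apply/negP => /andP[/andP[_ /eqP /cards0_eq ->]]; by rewrite inE.
rewrite sub_reindex //.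
have -> : #|[set T in subsamples (A :\ i) k | j \in i |: T]| =
          #|[set T in subsamples (A :\ i) k | j \in T]|.
  have ji : (j == i) = false by rewrite eq_sym (negbTE ij).
  by apply: eq_card => S; rewrite !inE ji.
have jA' : j \in A :\ i by rewrite !inE eq_sym ij.
have h := cnt1 k jA'.
have hA : #|A| = (#|A :\ i|).+1 by rewrite (cardsD1 i A) iA.
move: h; set c := #|_| => h; set a := #|A :\ i| in h hA *.
rewrite hA /=.
have -> : (c * (a.+1 * a) = a.+1 * (c * a))%N by ring.
rewrite h mulnA mul_bin_diag; ring.
Qed.

End Aux.

Lemma qfE (R : realFieldType) n (x : 'cV[R]_n) (M : 'M[R]_n) :
  (x^T *m M *m x) 0 0 = \sum_a \sum_b x a 0 * M a b * x b 0.
Proof.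
rewrite mxE; under eq_bigr => b _ do rewrite mxE mulr_suml.
rewrite exchange_big; apply: eq_bigr => a _; apply: eq_bigr => b _.
by rewrite mxE.
Qed.

Section Main.
Variables (R : realFieldType) (n : nat) (A : {set 'I_n}) (m : nat).
Hypotheses (hN : (2 <= #|A|)%N) (hm1 : (1 <= m)%N) (hmN : (m <= #|A|)%N).

Definition NN : R := #|A|%:R.
Definition MM : R := m%:R.
Definition DD := subsamples A m.
Definition ZZ : R := #|DD|%:R.
Definition pp := ind_vec R A.
Definition cc : R := (m%:R)^-1 * ((#|A|%:R - m%:R) / (#|A|%:R - 1)).

Lemma ZE : #|DD| = 'C(#|A|, m).
Proof. exact: cards_draws. Qed.

Lemma Z_neq0 : ZZ != 0.
Proof. by rewrite /ZZ pnatr_eq0 ZE -lt0n bin_gt0. Qed.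

Lemma N_ge2 : 2%:R <= NN.
Proof. by rewrite /NN ler_nat. Qed.

Lemma M_ge1 : 1 <= MM.
Proof. by rewrite /MM ler1n. Qed.

Lemma sum_ind (P : {set 'I_n} -> bool) :
  \sum_(S in DD) ((P S)%:R : R) = (#|[set S in DD | P S]|)%:R.
Proof.
rewrite -sum1_card natr_sum big_mkcond [RHS]big_mkcond /=.
by apply: eq_bigr => S _; rewrite [in RHS]inE; case: (S \in DD); case: (P S).
Qed.

Lemma qD S a : S \in DD -> ind_vec R S a 0 = (a \in S)%:R / MM.
Proof. by rewrite /DD inE => /andP[_ /eqP cS]; rewrite mxE cS. Qed.

Lemma cnt0 a (Q : {set 'I_n} -> bool) : a \notin A ->
  (forall S, Q S -> a \in S) -> #|[set S in DD | Q S]| = 0%N.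
Proof.
move=> aA hQ; apply: eq_card0 => S; rewrite !inE.
apply/negP => /andP[/andP[sSA _] /hQ aS]; move: aA; by rewrite (subsetP sSA).
Qed.

Lemma pE a : pp a 0 = (a \in A)%:R / NN.
Proof. by rewrite /pp mxE. Qed.

Lemma sumq a : \sum_(S in DD) ind_vec R S a 0 = ZZ * pp a 0.
Proof.
under eq_bigr => S hS do rewrite qD //.
rewrite -mulr_suml sum_ind pE.
have hN2 := N_ge2; have hM1 := M_ge1.
case aA: (a \in A).
  have h := cnt1 m aA.
  move/(congr1 (fun x => x%:R : R)): h; rewrite !natrM -ZE -/NN -/MM -/ZZ.
  set C := (#|_|%:R) => h.
  have -> : C = ZZ * MM / NN by rewrite -h mulfK //; lra.
  rewrite /= mulr1n; field; apply/andP; split; lra.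
by rewrite (@cnt0 a (fun S => a \in S)) ?aA // mul0r mul0r mulr0.
Qed.

Lemma sumqq a b : \sum_(S in DD) (ind_vec R S a 0 * ind_vec R S b 0) =
  ZZ * (cc * (a == b)%:R * pp a 0 + (1 - cc) * (pp a 0 * pp b 0)).
Proof.
have e : forall S, S \in DD -> ind_vec R S a 0 * ind_vec R S b 0 =
    ((a \in S) && (b \in S))%:R * (MM^-1 * MM^-1).
  move=> S hS; rewrite !qD //.
  by case: (a \in S); case: (b \in S); rewrite /= ?mulr1n ?mul0r ?mulr0 ?mul1r ?mulr1 ?div1r.
under eq_bigr => S hS do rewrite e //.
rewrite -mulr_suml sum_ind !pE.
have hN2 := N_ge2; have hM1 := M_ge1.
case: (eqVneq a b) => [<-|ab].
  rewrite ?eqxx.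
  have -> : #|[set S in DD | (a \in S) && (a \in S)]| = #|[set S in DD | a \in S]|.
    by apply: eq_card => S; rewrite !inE andbb.
  case aA: (a \in A).
    have h := cnt1 m aA.
    move/(congr1 (fun x => x%:R : R)): h; rewrite !natrM -ZE -/NN -/MM -/ZZ.
    set C := (#|_|%:R) => h.
    have -> : C = ZZ * MM / NN by rewrite -h mulfK //; lra.
    rewrite /= mulr1n /cc -/NN -/MM; field; rewrite -/NN -/MM; apply/and3P; split; lra.
  by rewrite (@cnt0 a (fun S => a \in S)) ?aA //= !mul0r !mulr0 addr0 mulr0.
rewrite /= mulr0n mulr0 mul0r add0r.
case aA: (a \in A); last first.
  rewrite (@cnt0 a (fun S => (a \in S) && (b \in S))) ?aA //=; last by move=> S /andP[].
  by rewrite !mul0r !mulr0.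
case bA: (b \in A); last first.
  rewrite (@cnt0 b (fun S => (a \in S) && (b \in S))) ?bA //=; last by move=> S /andP[].
  by rewrite !mul0r !mulr0.
have h := cnt2 m aA bA ab.
move/(congr1 (fun x => x%:R : R)): h; rewrite !natrM -ZE -/NN -/ZZ.
rewrite -!subn1 !natrB // ?(leq_trans _ hN) // -/NN -/MM.
set C := (#|_|%:R) => h.
have -> : C = ZZ * (MM * (MM - 1)) / (NN * (NN - 1)).
  by rewrite -h mulfK // mulf_neq0 //; lra.
rewrite /= !mulr1n /cc -/NN -/MM; field; rewrite -/NN -/MM; apply/and3P; split; lra.
Qed.


Lemma subE (u v : 'cV[R]_n) i : (u - v) i 0 = u i 0 - v i 0.
Proof. by rewrite !mxE. Qed.

Lemma main_eq (M : 'M[R]_n) :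
  \sum_(S in DD) MMD2 M pp (ind_vec R S) = ZZ * (cc * CM pp M).
Proof.
rewrite /MMD2; under eq_bigr => S _ do rewrite qfE.
rewrite exchange_big /=; under eq_bigr => a _ do rewrite exchange_big /=.
transitivity (\sum_a \sum_b (ZZ * cc) * ((a == b)%:R * pp a 0 * M a b - pp a 0 * M a b * pp b 0)).
  apply: eq_bigr => a _; apply: eq_bigr => b _.
  have e : forall S, (pp - ind_vec R S) a 0 * M a b * (pp - ind_vec R S) b 0 =
     pp a 0 * M a b * pp b 0 - pp a 0 * M a b * ind_vec R S b 0
     - M a b * pp b 0 * ind_vec R S a 0 + M a b * (ind_vec R S a 0 * ind_vec R S b 0).
    by move=> S; rewrite !subE; ring.
  under eq_bigr => S _ do rewrite e.
  rewrite !big_split /= !sumrN sumr_const -mulr_natr -!mulr_sumr !sumq sumqq -/ZZ.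
  ring.
rewrite /CM qfE.
have h1 : \sum_a \sum_b (a == b)%:R * pp a 0 * M a b = \sum_a pp a 0 * M a a.
  apply: eq_bigr => a _; rewrite (bigD1 a) //= eqxx mul1r big1 ?addr0 //.
  by move=> b /= ba; rewrite eq_sym (negbTE ba) !mul0r.
under eq_bigr => a _ do rewrite -mulr_sumr sumrB.
by rewrite -mulr_sumr sumrB h1 mulrA.
Qed.

End Main.

Lemma sq_entry (R : realFieldType) n (K : 'M[R]_n) (x : 'cV[R]_n) i :
  K^T = K ->
  (x^T *m (K *m e_ R i *m (e_ R i)^T *m K) *m x) 0 0 = ((K *m x) i 0) ^+ 2.
Proof.
move=> hK.
have -> : x^T *m (K *m e_ R i *m (e_ R i)^T *m K) *m x =
          (x^T *m K *m e_ R i) *m ((e_ R i)^T *m K *m x) by rewrite !mulmxA.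
rewrite mxE big_ord1.
have e2 : ((e_ R i)^T *m K *m x) 0 0 = (K *m x) i 0.
  by rewrite /e_ trmx_delta -mulmxA -rowE mxE.
have e1 : (x^T *m K *m e_ R i) 0 0 = (K *m x) i 0.
  transitivity ((x^T *m K *m e_ R i)^T 0 0); first by rewrite [RHS]mxE.
  by rewrite !trmx_mul trmxK hK mulmxA e2.
by rewrite e1 e2 expr2.
Qed.

Lemma normI_ge0 (R : realFieldType) n (I : {set 'I_n}) (v : 'cV[R]_n) :
  0 <= normI I v.
Proof.
rewrite /normI; apply: (big_ind (fun x => 0 <= x)) => //.
by move=> x y hx hy; rewrite le_max hx.
Qed.

Lemma normI_ge (R : realFieldType) n (I : {set 'I_n}) (v : 'cV[R]_n) i :
  i \in I -> (v i 0) ^+ 2 <= normI I v ^+ 2.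
Proof.
move=> iI.
have h0 := normI_ge0 I v.
have h1 : `|v i 0| <= normI I v by rewrite /normI (bigD1 i) //= le_max lexx.
rewrite -real_normK ?num_real //.
have := normr_ge0 (v i 0); nra.
Qed.

Lemma Esub_le (R : realFieldType) n (A : {set 'I_n}) m (f g : {set 'I_n} -> R) :
  (forall S, f S <= g S) -> Esub A m f <= Esub A m g.
Proof.
move=> h; rewrite /Esub ler_wpM2r ?invr_ge0 ?ler0n //.
by apply: ler_sum => S _.
Qed.

Theorem proposition1 (R : realFieldType) (n : nat) (Xin : {set 'I_n}) (nout : nat)
  (hin : (2 <= #|Xin|)%N) (hout1 : (1 <= nout)%N) (hout2 : (nout <= #|Xin|)%N)
  (K : 'M[R]_n) (hK : psd K) (I : {set 'I_n}) :
  let pin := ind_vec R Xin in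
  let c := (nout%:R)^-1 * ((#|Xin|%:R - nout%:R) / (#|Xin|%:R - 1)) in
  Esub Xin nout (fun Xout => MMD2 K pin (ind_vec R Xout)) = c * CM pin K /\
  Esub Xin nout (fun Xout => normI I (K *m (pin - ind_vec R Xout)) ^+ 2)
    >= c * \big[Num.max/0]_(i in I) CM pin (K *m e_ R i *m (e_ R i)^T *m K).
Proof.
move=> pin c.
have part1 : forall M : 'M[R]_n,
    Esub Xin nout (fun Xout => MMD2 M pin (ind_vec R Xout)) = c * CM pin M.
  move=> M; rewrite /Esub (main_eq hin hout1 M).
  have hz := Z_neq0 R hout2.
  by rewrite /ZZ /DD mulrC mulKf.
split; first exact: part1.
set E := Esub _ _ _.
apply: (big_ind (fun x => c * x <= E)).
- rewrite mulr0 /E /Esub; apply: divr_ge0; last exact: ler0n.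
  by apply: sumr_ge0 => S _; apply: sqr_ge0.
- by move=> x y hx hy; case: (leP x y).
- move=> i iI; rewrite -part1 /E; apply: Esub_le => S.
  rewrite /MMD2 sq_entry; last by case: hK.
  exact: normI_ge.
Qed.
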